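(* Let $k$ be any field of characteristic $0$ (in particular $k=\mathbb R$), and let $\mathfrak m=\mathfrak m_{-1}\oplus\mathfrak m_{-2}$ be a non-degenerate graded nilpotent Lie algebra of depth $2$ over $k$, generated by $\mathfrak m_{-1}$, with $\dim\mathfrak m_{-2}=2$. Then the Tanaka prolongation of $\mathfrak m$ is infinite-dimensional.
   Context: A GNLA is a negatively graded Lie algebra $\mathfrak m=\bigoplus_{i\ge1}\mathfrak m_{-i}$ generated by $\mathfrak m_{-1}$; non-degenerate means $\mathfrak m_{-1}$ contains no non-zero central element. The Tanaka prolongation $\mathfrak g(\mathfrak m)$ is defined by $\mathfrak g_i(\mathfrak m)=\mathfrak m_i$ for $i<0$ and recursively, for $k\ge0$, $\mathfrak g_k(\mathfrak m)=\{\phi:\mathfrak m\to\bigoplus_{i<k}\mathfrak g_i(\mathfrak m)\text{ linear}\mid \phi(\mathfrak m_{-i})\subset\mathfrak g_{k-i}(\mathfrak m),\ \phi([x,y])=[\phi(x),y]+[x,\phi(y)]\ \forall x,y\in\mathfrak m\}$. *)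

(* Defs.v *)
From HB Require Import structures.
From mathcomp Require Import all_boot all_order all_algebra.
Set Implicit Arguments. Unset Strict Implicit. Unset Printing Implicit Defensive.
Import GRing.Theory.
Local Open Scope ring_scope.

(* A depth-2 graded nilpotent Lie algebra  m = m_{-1} (+) m_{-2}  over a     *)
(* field K is given by two finite-dimensional K-vector spaces V1 = m_{-1},   *)
(* V2 = m_{-2} and the bracket  br : V1 -> V1 -> V2  (the only possibly      *)
(* non-zero bracket; [m_{-1},m_{-2}] and [m_{-2},m_{-2}] lie in degrees -3,  *)
(* -4 and hence vanish, so Jacobi is automatic).                             *)

Definition is_depth2_GNLA (K : fieldType) (V1 V2 : vectType K)
  (br : V1 -> V1 -> V2) : Prop :=
  [/\
      (forall (a : K) (x y z : V1), br (a *: x + y) z = a *: br x z + br y z),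
      (forall (a : K) (x y z : V1), br z (a *: x + y) = a *: br z x + br z y),
      (forall x : V1, br x x = 0),
      (* m_{-2} != 0, i.e. depth exactly 2 *)
      (0 < \dim (fullv : {vspace V2}))%N &
      (* generated by m_{-1}: [m_{-1}, m_{-1}] spans m_{-2} *)
      (forall U : {vspace V2}, (forall x y : V1, br x y \in U) -> U = fullv)].

Definition gnla_nondegenerate (K : fieldType) (V1 V2 : vectType K)
  (br : V1 -> V1 -> V2) : Prop :=
  forall x : V1, (forall y : V1, br x y = 0) -> x = 0.

(* G n is the ambient space for the graded piece of degree n - 4:           *)
(*   G 0 = G 1 = 0  (degrees -4, -3, where g_i = 0),                         *)
(*   G 2 = m_{-2},  G 3 = m_{-1},                                            *)
(*   G (p+4) = (m_{-1} -> G (p+3)) * (m_{-2} -> G (p+2)),                    *)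
(* i.e. a map phi : m -> (+)_{i<p} g_i with phi(m_{-i}) in g_{p-i},          *)
(* recorded by its restrictions to the two homogeneous components of m.      *)
(* inG n A says that A lies in the Tanaka prolongation g_{n-4}(m).          *)

Section Tanaka.
Variables (K : fieldType) (V1 V2 : vectType K) (br : V1 -> V1 -> V2).

Fixpoint G (n : nat) : Type :=
  match n with
  | 0 => unit
  | 1 => unit
  | 2 => (V2 : Type)
  | 3 => (V1 : Type)
  | S ((S ((S (S p)) as r)) as q) => ((V1 -> G q) * (V2 -> G r))%type
  end.

Fixpoint gz (p : nat) : G p.+2 * G p.+3 :=
  match p return G p.+2 * G p.+3 with
  | 0 => ((0 : V2), (0 : V1))
  | S p' => let a := gz p' in (a.2, (fun _ => a.2, fun _ => a.1))
  end.

Definition gzero (n : nat) : G n :=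
  match n return G n with
  | 0 => tt
  | 1 => tt
  | S (S p) => (gz p).1
  end.

Fixpoint ga (p : nat) :
  (G p.+2 -> G p.+2 -> G p.+2) * (G p.+3 -> G p.+3 -> G p.+3) :=
  match p return
    (G p.+2 -> G p.+2 -> G p.+2) * (G p.+3 -> G p.+3 -> G p.+3) with
  | 0 => ((fun a b : V2 => a + b), (fun a b : V1 => a + b))
  | S p' => let f := ga p' in
      (f.2, fun (A B : G p'.+4) =>
              (fun x => f.2 (A.1 x) (B.1 x), fun y => f.1 (A.2 y) (B.2 y)))
  end.

Definition gadd (n : nat) : G n -> G n -> G n :=
  match n return G n -> G n -> G n with
  | 0 => fun _ _ => tt
  | 1 => fun _ _ => tt
  | S (S p) => (ga p).1
  end.

Fixpoint gs (p : nat) :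
  (K -> G p.+2 -> G p.+2) * (K -> G p.+3 -> G p.+3) :=
  match p return (K -> G p.+2 -> G p.+2) * (K -> G p.+3 -> G p.+3) with
  | 0 => ((fun c (a : V2) => c *: a), (fun c (a : V1) => c *: a))
  | S p' => let f := gs p' in
      (f.2, fun c (A : G p'.+4) =>
              (fun x => f.2 c (A.1 x), fun y => f.1 c (A.2 y)))
  end.

Definition gscale (n : nat) : K -> G n -> G n :=
  match n return K -> G n -> G n with
  | 0 => fun _ _ => tt
  | 1 => fun _ _ => tt
  | S (S p) => (gs p).1
  end.

Definition gopp (n : nat) (A : G n) : G n := gscale (-1) A.

(* bracket [A, y] of A in degree (n+1)-4 with y in m_{-1}:
   bracket of m if A is in m, evaluation A(y) if A has degree >= 0 *)
Definition act1 (n : nat) : G n.+1 -> V1 -> G n :=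
  match n return G n.+1 -> V1 -> G n with
  | 0 => fun _ _ => tt
  | 1 => fun _ _ => tt
  | 2 => fun (a : V1) (y : V1) => br a y
  | S (S (S p)) => fun (A : G p.+4) y => A.1 y
  end.

(* bracket [A, y] of A in degree (n+2)-4 with y in m_{-2} *)
Definition act2 (n : nat) : G n.+2 -> V2 -> G n :=
  match n return G n.+2 -> V2 -> G n with
  | 0 => fun _ _ => tt
  | 1 => fun _ _ => tt
  | S (S p) => fun (A : G p.+4) y => A.2 y
  end.

(* membership in the Tanaka prolongation; for degrees < 0 everything
   (i.e. all of m_{-1}, m_{-2}) belongs *)
Fixpoint inGp (p : nat) : (G p.+2 -> Prop) * (G p.+3 -> Prop) :=
  match p return (G p.+2 -> Prop) * (G p.+3 -> Prop) with
  | 0 => ((fun _ => True), (fun _ => True))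
  | S p' => let P := inGp p' in
    (P.2, fun (A : G p'.+4) =>
      let phi1 : V1 -> G p'.+3 := A.1 in
      let phi2 : V2 -> G p'.+2 := A.2 in
      [/\
          (forall (a : K) (x y : V1),
              phi1 (a *: x + y) = gadd (gscale a (phi1 x)) (phi1 y)),
          (forall (a : K) (x y : V2),
              phi2 (a *: x + y) = gadd (gscale a (phi2 x)) (phi2 y)),
          (* phi(m_{-1}) in g_{p-1}, phi(m_{-2}) in g_{p-2} *)
          (forall x : V1, P.2 (phi1 x)),
          (forall y : V2, P.1 (phi2 y)) &
          (* derivation: phi([x,y]) = [phi x, y] + [x, phi y],
             with [x, B] = - [B, x]; one clause per pair of components *)
          [/\ (forall x y : V1,
                 phi2 (br x y) =
                 gadd (@act1 p'.+2 (phi1 x) y) (gopp (@act1 p'.+2 (phi1 y) x))),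
              (forall (x : V1) (y : V2),
                 gzero p'.+1 =
                 gadd (@act2 p'.+1 (phi1 x) y) (gopp (@act1 p'.+1 (phi2 y) x))),
              (forall (x : V2) (y : V1),
                 gzero p'.+1 =
                 gadd (@act1 p'.+1 (phi2 x) y) (gopp (@act2 p'.+1 (phi1 y) x))) &
              (forall x y : V2,
                 gzero p' =
                 gadd (@act2 p' (phi2 x) y) (gopp (@act2 p' (phi2 y) x)))]])
  end.

Definition inG (n : nat) : G n -> Prop :=
  match n return G n -> Prop with
  | 0 => fun _ => True
  | 1 => fun _ => True
  | S (S p) => (inGp p).1
  end.

Definition prolong (k : nat) : G k.+4 -> Prop := @inG k.+4.

(* The positive part (+)_{k>=0} g_k(m) of the Tanaka prolongation is
   infinite-dimensional: for every N there are N linearly independent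
   elements of the direct sum (elements of the direct sum being finitely
   supported families k |-> f k in g_k). *)
Definition tanaka_infinite_dim : Prop :=
  forall N : nat, exists (B : nat) (f : 'I_N -> forall k : nat, G k.+4),
    [/\ (forall i k, @prolong k (f i k)),
        (forall i k, (B <= k)%N -> f i k = gzero k.+4) &
        (forall c : 'I_N -> K,
           (forall k, \big[@gadd k.+4/gzero k.+4]_(i < N) gscale (c i) (f i k)
                      = gzero k.+4) ->
           forall i, c i = 0)].

End Tanaka.

(* Main.v *)
Require Import Defs.
From HB Require Import structures.
From mathcomp Require Import all_boot all_order all_algebra all_field.
From Stdlib Require Import FunctionalExtensionality Classical.
Set Implicit Arguments. Unset Strict Implicit. Unset Printing Implicit Defensive.
Import GRing.Theory.
Local Open Scope ring_scope.

Section GOps.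
Variables (K : fieldType) (V1 V2 : vectType K).
Local Notation G := (@G K V1 V2).

Lemma ga_0l p : (forall X, (ga V1 V2 p).1 (gz V1 V2 p).1 X = X) /\
                (forall X, (ga V1 V2 p).2 (gz V1 V2 p).2 X = X).
Proof.
elim: p => [|p [IH1 IH2]]; first by split=> X /=; rewrite add0r.
split=> //= -[A B] /=; f_equal; apply: functional_extensionality => x.
  by rewrite IH2. by rewrite IH1.
Qed.

Lemma ga_0r p : (forall X, (ga V1 V2 p).1 X (gz V1 V2 p).1 = X) /\
                (forall X, (ga V1 V2 p).2 X (gz V1 V2 p).2 = X).
Proof.
elim: p => [|p [IH1 IH2]]; first by split=> X /=; rewrite addr0.
split=> //= -[A B] /=; f_equal; apply: functional_extensionality => x.
  by rewrite IH2. by rewrite IH1.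
Qed.

Lemma gs_0 p c : (gs V1 V2 p).1 c (gz V1 V2 p).1 = (gz V1 V2 p).1 /\
                 (gs V1 V2 p).2 c (gz V1 V2 p).2 = (gz V1 V2 p).2.
Proof.
elim: p => [|p [IH1 IH2]]; first by split; rewrite /= scaler0.
split=> //=; f_equal; apply: functional_extensionality => x.
  by rewrite IH2. by rewrite IH1.
Qed.

Lemma ga_N p : (forall X, (ga V1 V2 p).1 X ((gs V1 V2 p).1 (-1) X) = (gz V1 V2 p).1) /\
               (forall X, (ga V1 V2 p).2 X ((gs V1 V2 p).2 (-1) X) = (gz V1 V2 p).2).
Proof.
elim: p => [|p [IH1 IH2]]; first by split=> X /=; rewrite scaleN1r subrr.
split=> //= -[A B] /=; f_equal; apply: functional_extensionality => x.
  by rewrite IH2. by rewrite IH1.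
Qed.

Lemma gadd0l n (X : G n) : gadd (gzero V1 V2 n) X = X.
Proof. by case: n X => [|[|p]] X //=; [case: X | case: X | exact: (ga_0l p).1]. Qed.
Lemma gadd0r n (X : G n) : gadd X (gzero V1 V2 n) = X.
Proof. by case: n X => [|[|p]] X //=; [case: X | case: X | exact: (ga_0r p).1]. Qed.
Lemma gscale0 n c : gscale c (gzero V1 V2 n) = gzero V1 V2 n.
Proof. by case: n => [|[|p]] //=; exact: (gs_0 p c).1. Qed.
Lemma gaddN n (X : G n) : gadd X (gopp X) = gzero V1 V2 n.
Proof. by case: n X => [|[|p]] X //=; exact: (ga_N p).1. Qed.

End GOps.
Section BigG.
Variables (K : fieldType) (V1 V2 : vectType K).

Lemma big_gzero n N (Fi : 'I_N -> G V1 V2 n) :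
  (forall i, Fi i = gzero V1 V2 n) -> \big[@gadd _ _ _ n/gzero V1 V2 n]_(i < N) Fi i = gzero V1 V2 n.
Proof.
move=> H; elim: N Fi H => [|N IH] Fi H; first by rewrite big_ord0.
by rewrite big_ord_recl /= IH // H gadd0l.
Qed.

Lemma big_single n N (Fi : 'I_N -> G V1 V2 n) (i0 : 'I_N) :
  (forall i, i != i0 -> Fi i = gzero V1 V2 n) ->
  \big[@gadd _ _ _ n/gzero V1 V2 n]_(i < N) Fi i = Fi i0.
Proof.
elim: N Fi i0 => [|N IH] Fi i0 H; first by have := ltn_ord i0.
rewrite big_ord_recl /=.
case: (unliftP ord0 i0) H => [j -> | ->] H; last first.
  rewrite big_gzero ?gadd0r // => i; apply: H.
  by rewrite -(inj_eq val_inj).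
have -> := IH (fun i => Fi (lift ord0 i)) j.
  by rewrite H ?gadd0l // eq_sym.
by move=> i ne'; apply: H; apply: contra ne' => /eqP E; apply/eqP/(lift_inj E).
Qed.
End BigG.
Section Zero.
Variables (K : fieldType) (V1 V2 : vectType K) (br : V1 -> V1 -> V2).
Hypothesis brL : forall (a : K) (x y z : V1), br (a *: x + y) z = a *: br x z + br y z.

Lemma br0l y : br 0 y = 0.
Proof. by have := brL (-1) 0 0 y; rewrite scaler0 add0r scaleN1r addNr. Qed.

Lemma act1_0 k y : act1 br (gzero V1 V2 k.+1) y = gzero V1 V2 k.
Proof. by case: k => [|[|[|p]]] //=; rewrite br0l. Qed.

Lemma act2_0 k y : act2 (gzero V1 V2 k.+2) y = gzero V1 V2 k.
Proof. by case: k => [|[|p]]. Qed.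

Lemma zz n a : gadd (gscale a (gzero V1 V2 n)) (gzero V1 V2 n) = gzero V1 V2 n.
Proof. by rewrite gscale0 gadd0r. Qed.
Lemma sub00 n (A B : G V1 V2 n) : A = gzero V1 V2 n -> B = gzero V1 V2 n ->
  gzero V1 V2 n = gadd A (gopp B).
Proof. by move=> -> ->; rewrite gaddN. Qed.

Lemma inG_zero p : (inGp br p).1 (gz V1 V2 p).1 /\ (inGp br p).2 (gz V1 V2 p).2.
Proof.
elim: p => [|p [IH1 IH2]]; first done.
split; first exact: IH2.
split.
- move=> a x y; exact: (esym (zz p.+3 a)).
- move=> a x y; exact: (esym (zz p.+2 a)).
- move=> x; exact: IH2.
- move=> x; exact: IH1.
split.
- move=> x y; apply: (sub00 (n := p.+2)); exact: act1_0.
- move=> x y; apply: (sub00 (n := p.+1)); [exact: act2_0 | exact: act1_0].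
- move=> x y; apply: (sub00 (n := p.+1)); [exact: act1_0 | exact: act2_0].
- move=> x y; apply: (sub00 (n := p)); exact: act2_0.
Qed.
End Zero.
Section Constr.
Variables (K : fieldType) (V1 V2 : vectType K) (br : V1 -> V1 -> V2).
Hypothesis brL : forall (a : K) (x y z : V1), br (a *: x + y) z = a *: br x z + br y z.
Hypothesis brR : forall (a : K) (x y z : V1), br z (a *: x + y) = a *: br z x + br z y.
Variables (n m : nat) (b : 'I_n -> V1) (e : 'I_m -> V2).
Variables (L : fieldType) (iota : {rmorphism K -> L}) (lam : L -> K).
Hypothesis lamL : forall a z z', lam (iota a * z + z') = a * lam z + lam z'.
Variables (v : 'I_n -> L) (alpha : V1 -> L) (w : 'I_m -> L).
Hypothesis alphaL : forall a x y, alpha (a *: x + y) = iota a * alpha x + alpha y.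
Hypothesis HK : forall c y,
  br (\sum_j lam (c * v j) *: b j) y = \sum_i lam (c * alpha y * w i) *: e i.
Local Notation G := (@G K V1 V2).

Fixpoint F (k : nat) (c : L) : G k.+3 :=
  match k return G k.+3 with
  | 0 => (\sum_j lam (c * v j) *: b j : V1)
  | S k' => (fun x => F k' (c * alpha x), fun _ => gzero V1 V2 k'.+2)
  end.

Lemma F_lin k a c c' :
  F k (iota a * c + c') = gadd (gscale a (F k c)) (F k c').
Proof.
elim: k c c' => [|k IH] c c' /=.
  rewrite scaler_sumr -big_split /=; apply: eq_bigr => j _.
  by rewrite mulrDl -mulrA lamL scalerDl scalerA.
f_equal; apply: functional_extensionality => x.
  by rewrite mulrDl -mulrA IH.
by rewrite (gs_0 V1 V2 k a).1 (ga_0r V1 V2 k).1.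
Qed.


Lemma act1F_sym k c x y :
  act1 br (n := k.+2) (F k (c * alpha x)) y = act1 br (n := k.+2) (F k (c * alpha y)) x.
Proof.
case: k => [|k].
  change (br (F 0 (c * alpha x)) y = br (F 0 (c * alpha y)) x).
  by rewrite /= !HK [c * alpha x * _]mulrAC.
change (F k (c * alpha x * alpha y) = F k (c * alpha y * alpha x)).
by rewrite mulrAC.
Qed.

Lemma act2F k c y : act2 (n := k.+1) (F k c) y = gzero V1 V2 k.+1.
Proof. by case: k. Qed.

Lemma F_in k c : (inGp br k).2 (F k c).
Proof.
elim: k c => [|k IH] c; first done.
split.
- move=> a x y.
  change (F k (c * alpha (a *: x + y)) = gadd (gscale a (F k (c * alpha x))) (F k (c * alpha y))).
  by rewrite alphaL mulrDr mulrCA F_lin.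
- move=> a x y; exact: (esym (zz _ _ k.+2 a)).
- move=> x; exact: IH.
- move=> x; exact: (proj1 (inG_zero brL k)).
split.
- move=> x y; change (gzero V1 V2 k.+2 = gadd (act1 br (n := k.+2) (F k (c * alpha x)) y) (gopp (act1 br (n := k.+2) (F k (c * alpha y)) x))).
  by rewrite act1F_sym gaddN.
- move=> x y; apply: (sub00 (n := k.+1)); [exact: act2F | exact: (act1_0 brL k.+1)].
- move=> x y; apply: (sub00 (n := k.+1)); [exact: (act1_0 brL k.+1) | exact: act2F].
- move=> x y; apply: (sub00 (n := k)); exact: act2_0.
Qed.

End Constr.
Section Ev.
Variables (K : fieldType) (V1 V2 : vectType K).

Fixpoint ev (k : nat) : G V1 V2 k.+3 -> V1 -> V1 :=
  match k return G V1 V2 k.+3 -> V1 -> V1 with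
  | 0 => fun Z _ => Z
  | S k' => fun Z x => @ev k' (Z.1 x) x
  end.
Arguments ev : clear implicits.

Lemma ev_scale k a (Z : G V1 V2 k.+3) x : ev k (gscale a Z) x = a *: ev k Z x.
Proof. by elim: k a Z => [|k IH] a Z //=; rewrite -IH. Qed.

Lemma ev_zero k x : ev k (gzero V1 V2 k.+3) x = 0.
Proof. by elim: k => [|k IH] //=. Qed.

Variables (n : nat) (b : 'I_n -> V1) (L : fieldType) (lam : L -> K) (v : 'I_n -> L) (alpha : V1 -> L).

Lemma ev_F k c x : ev k (F V2 b lam v alpha k c) x = \sum_j lam (c * alpha x ^+ k * v j) *: b j.
Proof.
elim: k c => [|k IH] c /=; first by apply: eq_bigr => j _; rewrite expr0 mulr1.
by rewrite IH; apply: eq_bigr => j _; rewrite exprS mulrA.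
Qed.
End Ev.

Lemma master (K : fieldType) (V1 V2 : vectType K) (br : V1 -> V1 -> V2)
  (brL : forall (a : K) (x y z : V1), br (a *: x + y) z = a *: br x z + br y z)
  (n m : nat) (b : 'I_n -> V1) (e : 'I_m -> V2)
  (bfree : forall s : 'I_n -> K, \sum_j s j *: b j = 0 -> forall j, s j = 0)
  (L : fieldType) (iota : {rmorphism K -> L}) (mu : L -> K)
  (muL : forall a z z', mu (iota a * z + z') = a * mu z + mu z') (mu1 : mu 1 != 0)
  (v : 'I_n -> L) (alpha : V1 -> L) (w : 'I_m -> L)
  (alphaL : forall a x y, alpha (a *: x + y) = iota a * alpha x + alpha y)
  (HKall : forall lam : L -> K, (forall a z z', lam (iota a * z + z') = a * lam z + lam z') ->
     forall c y, br (\sum_j lam (c * v j) *: b j) y = \sum_i lam (c * alpha y * w i) *: e i)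
  (x0 : V1) (j0 : 'I_n) (hx0 : alpha x0 != 0) (hj0 : v j0 != 0) :
  tanaka_infinite_dim br.
Proof.
move=> N.
pose u k := alpha x0 ^+ k.+1 * v j0.
have u0 k : u k != 0 by rewrite mulf_neq0 // expf_neq0.
pose lamk k z := mu (z / u k).
have lamL k : forall a z z', lamk k (iota a * z + z') = a * lamk k z + lamk k z'.
  by move=> a z z'; rewrite /lamk mulrDl -mulrA muL.
pose f (i : 'I_N) k : G V1 V2 k.+4 :=
  if k == val i then F V2 b (lamk k) v alpha k.+1 1 else gzero V1 V2 k.+4.
exists N, f; split.
- move=> i k; rewrite /f; case: (k == val i).
    exact: (F_in brL (lamL k) alphaL (HKall _ (lamL k))).
  exact: (proj2 (inG_zero brL k.+1)).
- move=> i k le; rewrite /f; case: eqP => // E.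
  by have := ltn_ord i; rewrite -E ltnNge le.
move=> c Hc i.
have := Hc (val i).
rewrite (big_single (i0 := i)); last first.
  move=> i' ne; rewrite /f; case: eqP => [E|_]; last exact: gscale0.
  by case/eqP: ne; apply: val_inj.
rewrite /f eqxx => /(congr1 (fun Z => @ev K V1 V2 (val i).+1 Z x0)).
rewrite ev_scale ev_F ev_zero scaler_sumr.
under eq_bigr => j _ do rewrite scalerA.
move/bfree => /(_ j0).
rewrite mul1r /lamk -/(u (val i)) divff ?u0 //.
by move/eqP; rewrite mulf_eq0 (negPf mu1) orbF => /eqP.
Qed.
Section Alg.
Variables (K : fieldType) (V1 V2 : vectType K) (br : V1 -> V1 -> V2).
Hypothesis brL : forall (a : K) (x y z : V1), br (a *: x + y) z = a *: br x z + br y z.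
Hypothesis brR : forall (a : K) (x y z : V1), br z (a *: x + y) = a *: br z x + br z y.

Local Notation n := (\dim (fullv : {vspace V1})).
Local Notation m := (\dim (fullv : {vspace V2})).
Definition bb (j : 'I_n) : V1 := (vbasis (fullv : {vspace V1}))`_j.
Definition ee (i : 'I_m) : V2 := (vbasis (fullv : {vspace V2}))`_i.
Definition MM (i : 'I_m) : 'M[K]_n := \matrix_(j, l) coord (vbasis fullv) i (br (bb j) (bb l)).

Lemma br0r y : br y 0 = 0.
Proof. by have := brR (-1) 0 0 y; rewrite scaler0 add0r scaleN1r addNr. Qed.
Lemma brsuml (s : 'I_n -> K) (x : 'I_n -> V1) z :
  br (\sum_j s j *: x j) z = \sum_j s j *: br (x j) z.
Proof.
have mD : {morph (fun x => br x z) : x1 x2 / x1 + x2 >-> x1 + x2}.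
  by move=> x1 x2 /=; have := brL 1 x1 x2 z; rewrite !scale1r.
rewrite (big_morph _ mD (br0l brL z)).
by apply: eq_bigr => j _; rewrite -[s j *: x j]addr0 brL (br0l brL) addr0.
Qed.
Lemma brsumr (s : 'I_n -> K) (x : 'I_n -> V1) z :
  br z (\sum_j s j *: x j) = \sum_j s j *: br z (x j).
Proof.
have mD : {morph (fun x => br z x) : x1 x2 / x1 + x2 >-> x1 + x2}.
  by move=> x1 x2 /=; have := brR 1 x1 x2 z; rewrite !scale1r.
rewrite (big_morph _ mD (br0r z)).
by apply: eq_bigr => j _; rewrite -[s j *: x j]addr0 brR br0r addr0.
Qed.

Lemma brbE j y : br (bb j) y =
  \sum_i (\sum_l coord (vbasis fullv) l y * MM i j l) *: ee i.
Proof.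
rewrite {1}(coord_vbasis (memvf (br (bb j) y))); apply: eq_bigr => i _; congr (_ *: _).
rewrite {1}(coord_vbasis (memvf y)) brsumr linear_sum; apply: eq_bigr => l _.
by rewrite linearZ /= mxE.
Qed.

Lemma HKgen (L : fieldType) (iota : {rmorphism K -> L}) (lam : L -> K)
  (lamL : forall a z z', lam (iota a * z + z') = a * lam z + lam z')
  (v a : 'I_n -> L) (w : 'I_m -> L)
  (Hrow : forall i l, \sum_j v j * iota (MM i j l) = w i * a l) c y :
  br (\sum_j lam (c * v j) *: bb j) y =
  \sum_i lam (c * (\sum_l iota (coord (vbasis fullv) l y) * a l) * w i) *: ee i.
Proof.
have lam0 : lam 0 = 0.
  by have := lamL 1 0 0; rewrite rmorph1 mulr0 addr0 mul1r => /(congr1 (fun t => t - lam 0)); rewrite subrr addrK.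
have lamD z z' : lam (z + z') = lam z + lam z'.
  by have := lamL 1 z z'; rewrite rmorph1 !mul1r.
have lamZ a' z : lam (iota a' * z) = a' * lam z.
  by have := lamL a' z 0; rewrite addr0 lam0 addr0.
rewrite brsuml.
under eq_bigr => j _ do rewrite brbE scaler_sumr.
rewrite exchange_big /=; apply: eq_bigr => i _.
under eq_bigr => j _ do rewrite scalerA.
rewrite -scaler_suml; congr (_ *: _).
rewrite mulr_sumr mulr_suml (big_morph lam lamD lam0).
rewrite [LHS](eq_bigr (fun j => \sum_l lam (c * v j) * (coord (vbasis fullv) l y * MM i j l))); last by move=> j _; rewrite mulr_sumr.
rewrite exchange_big /=; apply: eq_bigr => l _.
set yl := coord _ l y.
have -> : c * (iota yl * a l) * w i = \sum_j iota (yl * MM i j l) * (c * v j).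
  transitivity (iota yl * c * \sum_j v j * iota (MM i j l)).
    by rewrite Hrow [w i * _]mulrC !mulrA [c * _]mulrC.
  rewrite mulr_sumr; apply: eq_bigr => j _; rewrite rmorphM.
  by rewrite -!mulrA; congr (_ * _); rewrite mulrA mulrC.
rewrite (big_morph lam lamD lam0); apply: eq_bigr => j _.
by rewrite lamZ mulrC.
Qed.

End Alg.
Section Fin.
Variables (K : fieldType) (V1 V2 : vectType K) (br : V1 -> V1 -> V2).
Hypothesis brL : forall (a : K) (x y z : V1), br (a *: x + y) z = a *: br x z + br y z.
Hypothesis brR : forall (a : K) (x y z : V1), br z (a *: x + y) = a *: br z x + br z y.
Local Notation n := (\dim (fullv : {vspace V1})).
Local Notation m := (\dim (fullv : {vspace V2})).
Local Notation b := (@bb K V1).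

Lemma bfreeP (s : 'I_n -> K) : \sum_j s j *: b j = 0 -> forall j, s j = 0.
Proof.
move=> H j; have := congr1 (coord (vbasis fullv) j) H.
rewrite linear0 linear_sum /= => <-.
rewrite (bigD1 j) //= big1 ?addr0.
  by rewrite linearZ /= /bb coord_free ?eqxx ?mulr1 //; apply: basis_free (vbasisP _).
move=> k nk; rewrite linearZ /= /bb coord_free; last by apply: basis_free (vbasisP _).
by rewrite (negPf nk) mulr0.
Qed.

Lemma coord_bb l l' : coord (vbasis fullv) l' (b l) = (l == l')%:R.
Proof. by rewrite /bb coord_free //; apply: basis_free (vbasisP _). Qed.

Lemma finish (L : fieldType) (iota : {rmorphism K -> L}) (mu : L -> K)
  (muL : forall a z z', mu (iota a * z + z') = a * mu z + mu z') (mu1 : mu 1 != 0)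
  (v a : 'I_n -> L) (w : 'I_m -> L)
  (Hrow : forall i l, \sum_j v j * iota (MM br i j l) = w i * a l)
  (l0 j0 : 'I_n) (hl0 : a l0 != 0) (hj0 : v j0 != 0) :
  tanaka_infinite_dim br.
Proof.
pose alpha y := \sum_l iota (coord (vbasis fullv) l y) * a l.
apply: (@master K V1 V2 br brL n m b (@ee K V2) bfreeP L iota mu muL mu1 v alpha w _ _ (b l0) j0).
- move=> c x y; rewrite /alpha mulr_sumr -big_split /=; apply: eq_bigr => l _.
  by rewrite linearD linearZ /= rmorphD rmorphM mulrDl mulrA.
- move=> lam lamL c y; exact: (HKgen brL brR lamL Hrow).
- rewrite /alpha (bigD1 l0) //= big1 ?addr0 ?coord_bb ?eqxx ?rmorph1 ?mul1r //.
  by move=> l nl; rewrite coord_bb eq_sym (negPf nl) rmorph0 mul0r.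
- exact: hj0.
Qed.
End Fin.
Lemma irr_factor (F : fieldType) (p : {poly F}) : (1 < size p)%N ->
  exists h : {poly F}, irreducible_poly h /\ (h %| p)%R.
Proof.
move: {2}(size p) (leqnn (size p)) => s; elim: s p => [|s IH] p Hs Hp.
  by move: (leq_trans Hp Hs).
case: (classic (forall q : {poly F}, size q != 1%N -> q %| p -> q %= p)) => [H|H].
  by exists p; split => //; split.
move/not_all_ex_not: H => [q Hq]. have [q1 Hq2] := imply_to_and _ _ Hq.
have [qp nqp] := imply_to_and _ _ Hq2. move/negP: nqp => nqp.
have p0 : p != 0 by rewrite -size_poly_gt0 (ltn_trans _ Hp).
have q0 : q != 0 by apply: contraNneq p0 => E; move: qp; rewrite E dvd0p.
have le := dvdp_leq p0 qp.
have ne : size q != size p by rewrite dvdp_size_eqp.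
have lt : (size q < size p)%N by rewrite ltn_neqAle ne le.
have h1 : (size q <= s)%N by rewrite -ltnS (leq_trans lt Hs).
have h2 : (1 < size q)%N by rewrite ltn_neqAle eq_sym q1 size_poly_gt0 q0.
have [h [hi hq]] := IH q h1 h2.
by exists h; split => //; apply: dvdp_trans hq qp.
Qed.

Theorem mainTheorem6 (K : fieldType) (V1 V2 : vectType K)
  (br : V1 -> V1 -> V2)
  (hchar : [pchar K] =i pred0)
  (hGNLA : is_depth2_GNLA br)
  (hnd : gnla_nondegenerate br)
  (hdim : \dim (fullv : {vspace V2}) = 2%N) :
  tanaka_infinite_dim br.
Proof.
case: hGNLA => brL brR _ _ hgen.
set n := \dim (fullv : {vspace V1}).
set m := \dim (fullv : {vspace V2}).
have n0 : (0 < n)%N.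
  rewrite lt0n; apply/negP => /eqP n0.
  have x0 (x : V1) : x = 0.
    rewrite (coord_vbasis (memvf x)) big1 // => i _.
    by have := leq_trans (ltn_ord i) (eq_leq n0).
  have E : (0%VS : {vspace V2}) = fullv.
    by apply: hgen => x y; rewrite (x0 x) (br0l brL) mem0v.
  by have := hdim; rewrite -E dimv0.
pose i0 : 'I_m := cast_ord (esym hdim) (0 : 'I_2).
pose i1 : 'I_m := cast_ord (esym hdim) (1 : 'I_2).
have i01 : i0 != i1 by rewrite -(inj_eq val_inj).
have icase (i : 'I_m) : i = i0 \/ i = i1.
  have := ltn_ord i; rewrite {2}/m hdim.
  case: i => [[|[|k]] Hk] //= _; [left | right]; exact: val_inj.
have ck (u : 'rV[K]_n) : u *m MM br i0 = 0 -> u *m MM br i1 = 0 -> u = 0.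
  move=> u0 u1.
  have Hrow : forall i l, \sum_j u 0 j * (idfun : {rmorphism K -> K}) (MM br i j l)
       = (fun _ => 0 : K) i * (fun _ => 0 : K) l.
    move=> i l; rewrite mulr0 /=.
    have : (u *m MM br i) 0 l = 0 by case: (icase i) => ->; rewrite ?u0 ?u1 mxE.
    by rewrite mxE.
  have := HKgen brL brR (iota := (idfun : {rmorphism K -> K})) (lam := id) (fun a z z' => erefl) Hrow 1.
  set x := \sum_j _ *: _ => Hx.
  have x0 : x = 0.
    apply: hnd => y; rewrite Hx big1 // => i _; by rewrite mulr0 scale0r.
  apply/rowP => j; rewrite mxE.
  by have := bfreeP (s := fun j => 1 * u 0 j) x0 j; rewrite mul1r.
have nz_entry (L : fieldType) (u : 'rV[L]_n) : u != 0 -> exists l, u 0 l != 0.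
  move=> un0; case: (pickP (fun l => u 0 l != 0)) => [l hl|H]; first by exists l.
  by case/eqP: un0; apply/rowP => l; have := H l; rewrite mxE => /negbFE/eqP.
have [d0|d0] := eqVneq (\det (MM br i1)) 0.
  (* singular case: work over K itself *)
  move/eqP/det0P: d0 => [v vn0 vM1].
  set a := v *m MM br i0.
  have a0 : a != 0 by apply: contra vn0 => /eqP a0; apply/eqP; apply: ck.
  have [l0 hl0] := nz_entry _ a a0.
  have [j0 hj0] := nz_entry _ v vn0.
  apply: (finish brL brR (iota := (idfun : {rmorphism K -> K})) (mu := id)
     (fun a z z' => erefl) (oner_neq0 K) (v := v 0) (a := a 0)
     (w := fun i => if i == i1 then 0 else 1) _ hl0 hj0).
  move=> i l /=.
  have E (M : 'M[K]_n) : \sum_j v 0 j * M j l = (v *m M) 0 l by rewrite mxE.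
  case: (icase i) => ->; rewrite E.
    by rewrite (negPf i01) mul1r.
  by rewrite eqxx vM1 mxE mul0r.
(* regular case: go to a field extension *)
have U1 : MM br i1 \in unitmx by rewrite unitmxE unitfE.
pose B := - (MM br i0 *m invmx (MM br i1)).
have sz : (1 < size (char_poly B))%N by rewrite size_char_poly ltnS.
have [h [hirr hdvd]] := irr_factor sz.
have [L _ [z hz _]] := irredp_FAdjoin hirr.
pose iota : {rmorphism K -> L} := GRing.in_alg L.
have rz : root (char_poly (map_mx iota B)) z.
  rewrite -map_char_poly; case/dvdpP: hdvd => q ->.
  by rewrite rmorphM /root hornerM (eqP hz) mulr0.
move: rz; rewrite -eigenvalue_root_char => /eigenvalueP [v vB vn0].
have U1' : map_mx iota (MM br i1) \in unitmx by rewrite map_unitmx.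
set M0 := map_mx iota (MM br i0) in vB *.
set M1 := map_mx iota (MM br i1) in vB U1' *.
set a := v *m M1.
have vM0 : v *m M0 = - z *: a.
  move: vB; rewrite /B map_mxN map_mxM map_invmx -/M0 -/M1 mulmxN mulmxA => /eqP.
  rewrite eqr_oppLR => /eqP E.
  by rewrite -(mulmxKV U1' (v *m M0)) E mulNmx -scalemxAl scaleNr.
have a0 : a != 0.
  apply: contra vn0 => /eqP a0; apply/eqP.
  by rewrite -(mulmxK U1' v) -/M1 -/a a0 mul0mx.
have [l0 hl0] := nz_entry _ a a0.
have [j0 hj0] := nz_entry _ v vn0.
have [k0 hk0] : exists k, coord (vbasis (fullv : {vspace L})) k 1 != 0.
  case: (pickP (fun k => coord (vbasis (fullv : {vspace L})) k 1 != 0)) => [k hk|H].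
    by exists k.
  exfalso; have := oner_neq0 L; rewrite (coord_vbasis (memvf (1 : L))) big1 ?eqxx //.
  by move=> k _; have := H k => /negbFE/eqP ->; rewrite scale0r.
apply: (finish brL brR (iota := iota) (mu := coord (vbasis (fullv : {vspace L})) k0)
   _ hk0 (v := v 0) (a := a 0) (w := fun i => if i == i1 then 1 else - z) _ hl0 hj0).
  by move=> c t t'; rewrite /iota /= mulr_algl linearD linearZ.
move=> i l /=.
have E (M : 'M[K]_n) : \sum_j v 0 j * iota (M j l) = (v *m map_mx iota M) 0 l.
  by rewrite mxE; apply: eq_bigr => j _; rewrite mxE.
case: (icase i) => ->; rewrite E.
  by rewrite (negPf i01) -/M0 vM0 mxE.
by rewrite eqxx mul1r.
Qed.
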